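(* There is no computable enumeration without repetitions $(\psi_x)_{x\in\omega}$ of all unary partial computable functions such that the partial applicative structure $(\omega,\cdot)$ with $n\cdot m\simeq\psi_n(m)$ is a partial combinatory algebra (equivalently, contains elements $k,s$ with $kab=a$, $sab\downarrow$ and $sabc\simeq ac(bc)$ for all $a,b,c\in\omega$).
   Context: A partial applicative structure is a set with a partial binary application $ab$, left associative and strict; $\simeq$ means both sides undefined or both defined and equal. It is a partial combinatory algebra if for every term $t(x_1,\dots,x_n,x)$ there is $b$ with $ba_1\cdots a_n\downarrow$ and $ba_1\cdots a_na\simeq t(a_1,\dots,a_n,a)$ for all $a_i,a$; this is equivalent to the existence of $k,s$ as in the claim. A computable enumeration means $(x,y)\mapsto\psi_x(y)$ is partial computable; without repetitions means each unary partial computable function occurs exactly once. *)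

(* Defs.v *)
From Stdlib Require Import Arith List.
Import ListNotations.

Inductive code : Type :=
| Zero : code
| Succ : code
| Proj (i : nat) : code
| Comp (f : code) (gs : list code) : code
| Rec (f g : code) : code
| Mu (f : code) : code.

Inductive eval : code -> list nat -> nat -> Prop :=
| eZero v : eval Zero v 0
| eSucc x v : eval Succ (x :: v) (S x)
| eProj i v : i < length v -> eval (Proj i) v (nth i v 0)
| eComp f gs v ws y : evals gs v ws -> eval f ws y -> eval (Comp f gs) v y
| eRec0 f g v y : eval f v y -> eval (Rec f g) (0 :: v) y
| eRecS f g n v r y :
    eval (Rec f g) (n :: v) r -> eval g (n :: r :: v) y ->
    eval (Rec f g) (S n :: v) y
| eMu f v n :
    eval f (n :: v) 0 ->
    (forall m, m < n -> exists k, eval f (m :: v) (S k)) ->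
    eval (Mu f) v n
with evals : list code -> list nat -> list nat -> Prop :=
| evNil v : evals [] v []
| evCons g gs v w ws : eval g v w -> evals gs v ws -> evals (g :: gs) v (w :: ws).

(** A unary partial function on omega, as a graph: [f x y] means f(x) = y. *)
Definition pfun := nat -> nat -> Prop.

Definition partial_computable1 (f : pfun) : Prop :=
  exists c : code, forall x y, f x y <-> eval c [x] y.

Definition computable_enumeration (psi : nat -> pfun) : Prop :=
  exists c : code, forall x y z, psi x y z <-> eval c [x; y] z.

Definition enumerates_without_repetitions (psi : nat -> pfun) : Prop :=
  (forall x, partial_computable1 (psi x)) /\
  (forall f, partial_computable1 f ->
     exists! x, forall y z, psi x y z <-> f y z).

Definition is_pca (psi : nat -> pfun) : Prop :=
  exists k s : nat,
    (forall a b, exists ka, psi k a ka /\ psi ka b a) /\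
    (forall a b, exists sa sab, psi s a sa /\ psi sa b sab) /\
    (forall a b c sa sab, psi s a sa -> psi sa b sab ->
       forall e, psi sab c e <->
         (exists u v, psi a c u /\ psi b c v /\ psi u v e)).

(* Main.v *)
Require Import Defs.
From Stdlib Require Import Arith List Lia.
Import ListNotations.

Fixpoint eval_det c v y (H : eval c v y) {struct H} : forall y', eval c v y' -> y = y'
with evals_det gs v ws (H : evals gs v ws) {struct H} : forall ws', evals gs v ws' -> ws = ws'.
Proof.
- destruct H as [v|x v|i v Hi|f gs v ws y Hg Hf|f g v y Hf|f g n v r y Hr Hg|f v n H0 H1];
  intros y' H'.
  + inversion H'; reflexivity.
  + inversion H'; reflexivity.
  + inversion H'; reflexivity.
  + inversion H' as [| | |f' gs' v' ws' y'' Hg' Hf'| | |]; subst.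
    pose proof (evals_det _ _ _ Hg _ Hg'); subst.
    exact (eval_det _ _ _ Hf _ Hf').
  + inversion H' as [| | | |f' g' v' y'' Hf'| |]; subst. exact (eval_det _ _ _ Hf _ Hf').
  + inversion H' as [| | | | |f' g' n' v' r' y'' Hr' Hg'|]; subst.
    pose proof (eval_det _ _ _ Hr _ Hr'); subst.
    exact (eval_det _ _ _ Hg _ Hg').
  + inversion H' as [| | | | | |f' v' n' H0' H1']; subst.
    destruct (Nat.lt_trichotomy n y') as [Hl|[Hl|Hl]].
    * destruct (H1' n Hl) as [k Hk].
      pose proof (eval_det _ _ _ H0 _ Hk). discriminate.
    * exact Hl.
    * destruct (H1 y' Hl) as [k Hk].
      pose proof (eval_det _ _ _ Hk _ H0'). discriminate.
- destruct H as [v|g gs v w ws Hg Hgs]; intros ws' H'.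
  + inversion H'; reflexivity.
  + inversion H' as [|g' gs' v' w' ws'' Hg' Hgs']; subst.
    pose proof (eval_det _ _ _ Hg _ Hg'); subst.
    f_equal. exact (evals_det _ _ _ Hgs _ Hgs').
Qed.

Fixpoint cnst (n : nat) : code :=
  match n with 0 => Zero | S m => Comp Succ [cnst m] end.

Lemma cnst_ok n v : eval (cnst n) v n.
Proof.
  induction n; simpl. constructor.
  econstructor. econstructor. exact IHn. constructor. constructor.
Qed.

Lemma comp1 f g v a y : eval g v a -> eval f [a] y -> eval (Comp f [g]) v y.
Proof. intros. econstructor; [|eassumption]. repeat constructor; auto. Qed.

Lemma comp2 f g1 g2 v a b y : eval g1 v a -> eval g2 v b -> eval f [a;b] y ->
  eval (Comp f [g1;g2]) v y.
Proof. intros. econstructor; [|eassumption]. repeat constructor; auto. Qed.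

Definition predc := Rec Zero (Proj 0).
Lemma predc_ok n : eval predc [n] (pred n).
Proof.
  induction n. constructor; constructor.
  eapply eRecS. exact IHn.
  apply (eProj 0 [n; pred n]). simpl; lia.
Qed.

Definition subc := Rec (Proj 0) (Comp predc [Proj 1]).
Lemma subc_ok a b : eval subc [a;b] (b - a).
Proof.
  induction a.
  - constructor. rewrite Nat.sub_0_r. apply (eProj 0 [b]). simpl; lia.
  - eapply eRecS. exact IHa.
    eapply comp1. apply (eProj 1 [a; b - a; b]). simpl; lia.
    simpl. replace (b - S a) with (pred (b - a)) by lia. apply predc_ok.
Qed.

Definition addc := Rec (Proj 0) (Comp Succ [Proj 1]).
Lemma addc_ok a b : eval addc [a;b] (a + b).
Proof.
  induction a.
  - constructor. apply (eProj 0 [b]). simpl; lia.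
  - eapply eRecS. exact IHa.
    eapply comp1. apply (eProj 1 [a; a + b; b]). simpl; lia.
    simpl. constructor.
Qed.

Lemma comp1_inv f g v y : eval (Comp f [g]) v y -> exists a, eval g v a /\ eval f [a] y.
Proof.
  intro H. inversion H as [| | |f' gs' v' ws' y' Hg Hf| | |]; subst.
  inversion Hg as [|g' gs'' v'' w ws Hg1 Hgs]; subst.
  inversion Hgs; subst. eauto.
Qed.

Lemma proj_inv i v y : eval (Proj i) v y -> y = nth i v 0.
Proof. intro H; inversion H; auto. Qed.

Theorem mainTheorem9 :
  ~ exists psi : nat -> pfun,
      computable_enumeration psi /\
      enumerates_without_repetitions psi /\
      is_pca psi.
Proof.
  intros [psi [[cpsi Hc] [[Hpc Hsurj] [k [s [Hk [Hs1 Hs2]]]]]]].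
  assert (pfn : forall x y z1 z2, psi x y z1 -> psi x y z2 -> z1 = z2).
  { intros x y z1 z2 H1 H2. apply Hc in H1. apply Hc in H2. exact (eval_det _ _ _ H1 _ H2). }
  assert (Kc : forall a c ka, psi k a ka -> psi ka c a).
  { intros a c ka H. destruct (Hk a c) as [ka' [H1 H2]].
    rewrite (pfn _ _ _ _ H H1). exact H2. }
  destruct (Hk 0 0) as [K0 [HK0 _]].
  destruct (Hk K0 0) as [A [HA _]].
  destruct (Hs1 A 0) as [SA [_x [HSA _]]].
  assert (Hemp : partial_computable1 (fun _ _ => False)).
  { exists (Mu Succ). intros x y; split; [contradiction|].
    intro H. inversion H as [| | | | | |f' v' n' H0' H1']; subst. inversion H0'. }
  destruct (Hsurj _ Hemp) as [Z [HZ HZu]].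
  set (X := Comp cpsi [cnst k; Proj 0]).
  set (T := Comp cpsi [cnst SA; Comp cpsi [Comp cpsi [cnst s; X]; X]]).
  assert (claim : forall x, exists tx, eval T [x] tx /\ (tx = Z <-> ~ exists v, psi x x v)).
  { intro x. destruct (Hk x 0) as [kx [Hkx _]].
    destruct (Hs1 kx kx) as [sa [bx [H1 H2]]].
    assert (Hb : forall c e, psi bx c e <-> psi x x e).
    { intros c e. rewrite (Hs2 _ _ c _ _ H1 H2 e). split.
      - intros [u [v [Hu [Hv He]]]].
        pose proof (Kc _ c _ Hkx) as Hx.
        rewrite (pfn _ _ _ _ Hu Hx), (pfn _ _ _ _ Hv Hx) in He. exact He.
      - intro He. exists x, x. pose proof (Kc _ c _ Hkx). auto. }
    destruct (Hs1 A bx) as [sa' [tx [H3 H4]]].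
    assert (sa' = SA) by exact (pfn _ _ _ _ H3 HSA). subst sa'.
    exists tx. split.
    - eapply comp2. apply cnst_ok.
      + eapply comp2. eapply comp2. apply cnst_ok.
        * eapply comp2. apply cnst_ok. apply (eProj 0 [x]). simpl; lia.
          apply Hc. exact Hkx.
        * apply Hc. exact H1.
        * eapply comp2. apply cnst_ok. apply (eProj 0 [x]). simpl; lia.
          apply Hc. exact Hkx.
        * apply Hc. exact H2.
      + apply Hc. exact H4.
    - split.
      + intros -> [v Hv].
        assert (psi Z 0 0).
        { apply (Hs2 _ _ 0 _ _ HSA H4 0). exists K0, v.
          split. apply Kc, HA. split. apply Hb, Hv. apply Kc, HK0. }
        apply HZ in H. exact H.
      + intro Hn. symmetry. apply HZu. intros y z; split; [|contradiction].
        intro H. apply (Hs2 _ _ y _ _ HSA H4 z) in H.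
        destruct H as [u [v [_ [Hv _]]]]. apply Hn. exists v. apply Hb in Hv. exact Hv.
  }
  set (D := Comp addc [Comp subc [cnst Z; T]; Comp subc [T; cnst Z]]).
  set (fc := Mu (Comp D [Proj 1])).
  assert (Hf : partial_computable1 (fun x y => eval fc [x] y)).
  { exists fc. tauto. }
  destruct (Hsurj _ Hf) as [e [He _]].
  destruct (claim e) as [te [HTe Hiff]].
  assert (HD : eval D [e] ((te - Z) + (Z - te))).
  { eapply comp2. eapply comp2. apply cnst_ok. exact HTe. apply subc_ok.
    eapply comp2. exact HTe. apply cnst_ok. apply subc_ok. apply addc_ok. }
  assert (nP : ~ exists v, psi e e v).
  { intros [v Hv]. apply He in Hv. inversion Hv as [| | | | | |f' v' n' H0' H1']; subst.
    apply comp1_inv in H0'. destruct H0' as [a [Ha HDa]].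
    apply proj_inv in Ha. simpl in Ha. subst a.
    pose proof (eval_det _ _ _ HD _ HDa) as E.
    apply Hiff; [lia|]. exists v. apply He. exact Hv. }
  apply nP. exists 0. apply He.
  apply Hiff in nP. subst te. rewrite Nat.sub_diag in HD. simpl in HD.
  constructor.
  - eapply comp1. apply (eProj 1 [0; e]). simpl; lia. simpl. exact HD.
  - intros m Hm; lia.
Qed.
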